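(* Let $(\sigma_n)_{n \geq 1}$ be a sequence of permutations with $\sigma_n \in \mathcal{S}_n$ for all $n$, and let $\Sigma_n \in U(n)$ be the permutation matrix of $\sigma_n$, i.e. $\Sigma_n e_j = e_{\sigma_n(j)}$. Then $(\Sigma_n)_{n \geq 1}$ is a virtual isometry if and only if $(\sigma_n)_{n \geq 1}$ is a virtual permutation.
   Context: For $n \geq m \geq 1$, let $p_{n,m}:\mathcal{S}_n\to\mathcal{S}_m$ map $\sigma$ to the permutation obtained by deleting all elements of $\{m+1,\dots,n\}$ from the cycle structure of $\sigma$. A virtual permutation is a sequence $(\sigma_n)_{n\ge1}$ with $\sigma_n\in\mathcal{S}_n$ and $\sigma_m = p_{n,m}(\sigma_n)$ for all $n\ge m\ge1$. Let $(e_k)_{k\ge1}$ be the canonical basis of $\ell^2$; identify $\mathbb{C}^n$ with the span of $e_1,\dots,e_n$ and $U(n)$ with the unitary operators on $\ell^2$ fixing every $e_k$, $k>n$. For $n\ge m\ge1$ and $u\in U(n)$, $\pi_{n,m}(u)$ is the unique $v\in U(m)$ such that the range of $u-v$ is contained in $(u-\mathrm{Id})(\mathrm{span}\{e_k:k>m\})$ (existence and uniqueness are known). A virtual isometry is a sequence $(u_n)_{n\ge1}$ with $u_n\in U(n)$ and $\pi_{n+1,n}(u_{n+1})=u_n$ for all $n\ge1$. *)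

(* Defs.v *)
From HB Require Import structures.
From mathcomp Require Import all_boot all_order all_algebra all_fingroup.
From mathcomp Require Import complex.
From mathcomp Require Import reals.
Set Implicit Arguments. Unset Strict Implicit. Unset Printing Implicit Defensive.
Import Order.TTheory GRing.Theory Num.Theory.
Local Open Scope ring_scope.

(* Conventions: the basis vector e_{k+1} of the paper is the k-th (0-based)
   coordinate; C^n = 'cV_n; an element of S_n is a permutation of 'I_n
   (j <-> j+1). *)

Fixpoint cycle_next n (s : 'S_n) (m k : nat) (x : 'I_n) : 'I_n :=
  match k with
  | 0 => x
  | k'.+1 => let y := s x in if (y < m)%N then y else cycle_next s m k' y
  end.

(* p_{n,m}(s) evaluated at i (i < m <= n): the image of i in the permutation
   obtained by deleting all elements >= m (i.e. {m+1,...,n} in 1-based terms)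
   from the cycle structure of s, namely the first element of the sequence
   s(i), s^2(i), ... that is < m. *)
Definition pnm_val n (s : 'S_n) (m : nat) (i : nat) : nat :=
  match insub i : option 'I_n with
  | Some x => val (cycle_next s m n x)
  | None => i
  end.

Definition virtual_permutation (sigma : forall n : nat, 'S_n) : Prop :=
  forall (m n : nat), (1 <= m)%N -> (m <= n)%N ->
    forall i : 'I_m, val (sigma m i) = pnm_val (sigma n) m (val i).

Section Iso.
Variable R : realType.
Local Notation C := R[i].

Definition conjT n (u : 'M[C]_n) : 'M[C]_n := (map_mx (@conjc R) u)^T.

Definition unitary n (u : 'M[C]_n) : Prop := u *m conjT u = 1%:M.

(* an operator on C^m extended to C^n (m <= n) by fixing e_k, k > m *)
Definition embed_mx m n (v : 'M[C]_m) : 'M[C]_n :=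
  \matrix_(i < n, j < n)
    match (insub (val i) : option 'I_m), (insub (val j) : option 'I_m) with
    | Some i', Some j' => v i' j'
    | _, _ => (i == j)%:R
    end.

(* diagonal projection onto span{e_k : k > m} (1-based), inside C^n *)
Definition tail_proj m n : 'M[C]_n := diag_mx (\row_(k < n) ((m <= k)%N)%:R).

(* pi_{n,m}(u) = v : v in U(m) and range(u - v) is contained in
   (u - Id)(span{e_k : k > m}).  Ranges are column spaces, expressed via
   row spaces of transposes. *)
Definition pi_rel m n (u : 'M[C]_n) (v : 'M[C]_m) : Prop :=
  unitary v /\
  (((u - @embed_mx m n v)^T) <= (((u - 1%:M) *m tail_proj m n)^T))%MS.

Definition virtual_isometry (u : forall n : nat, 'M[C]_n) : Prop :=
  (forall n, (1 <= n)%N -> unitary (u n)) /\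
  (forall n, (1 <= n)%N -> @pi_rel n n.+1 (u n.+1) (u n)).

End Iso.

Definition perm_matrix (R : realType) n (s : 'S_n) : 'M[R[i]]_n :=
  \matrix_(i < n, j < n) (i == s j)%:R.

(* Main.v *)
Require Import Defs.
From HB Require Import structures.
From mathcomp Require Import all_boot all_order all_algebra all_fingroup.
From mathcomp Require Import complex reals.
Set Implicit Arguments. Unset Strict Implicit. Unset Printing Implicit Defensive.


Definition sf n (s : 'S_n) (x : nat) : nat :=
  match insub x : option 'I_n with Some y => val (s y) | None => x end.

Fixpoint cn (f : nat -> nat) (m k x : nat) : nat :=
  match k with 0 => x | k'.+1 => let y := f x in if (y < m)%N then y else cn f m k' y end.

Lemma sf_val n (s : 'S_n) (x : 'I_n) : sf s x = val (s x).
Proof. rewrite /sf; case: insubP => [y _ /val_inj -> //|]; by rewrite ltn_ord. Qed.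

Lemma sf_lt n (s : 'S_n) x : (x < n)%N -> (sf s x < n)%N.
Proof. by move=> xn; rewrite /sf; case: insubP => [y _ _|]; rewrite ?ltn_ord ?xn. Qed.

Lemma sf_out n (s : 'S_n) x : (n <= x)%N -> sf s x = x.
Proof. by move=> xn; rewrite /sf; case: insubP => [y|] //; rewrite ltnNge xn. Qed.

Lemma cycle_next_cn n (s : 'S_n) m k (x : 'I_n) :
  val (Defs.cycle_next s m k x) = cn (sf s) m k (val x).
Proof.
elim: k x => [|k IH] x //=; rewrite sf_val; case: ifP => // _; exact: IH.
Qed.

Lemma pnm_cn n (s : 'S_n) m i : (i < n)%N -> pnm_val s m i = cn (sf s) m n i.
Proof.
move=> lin; rewrite /pnm_val; case: insubP => [y _ <-|]; first by rewrite cycle_next_cn.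
by rewrite lin.
Qed.

Inductive FR (f : nat -> nat) (m : nat) : nat -> nat -> Prop :=
| FR1 x : (f x < m)%N -> FR f m x (f x)
| FR2 x y : (m <= f x)%N -> FR f m (f x) y -> FR f m x y.

Lemma FR_inv f m x y : FR f m x y ->
  ((f x < m)%N /\ y = f x) \/ ((m <= f x)%N /\ FR f m (f x) y).
Proof. by case=> [z hz|z w hz H]; [left|right]. Qed.

Lemma FR_det f m x y y' : FR f m x y -> FR f m x y' -> y = y'.
Proof.
move=> H; elim: H y' => [z hz|z w hz _ IH] y' /FR_inv [[h1 h2]|[h1 h2]].
- by [].
- by rewrite leqNgt hz in h1.
- by rewrite leqNgt h1 in hz.
- exact: IH.
Qed.

Lemma FR_cn f m o x : (0 < o)%N -> (iter o f x < m)%N ->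
  forall k, (o <= k)%N -> FR f m x (cn f m k x).
Proof.
elim: o x => [//|o IH] x _ ho [|k] //= hk.
case: ifP => hfx; first exact: FR1.
apply: FR2; first by rewrite leqNgt hfx.
case: o IH ho hk => [|o] IH ho hk; first by rewrite /= hfx in ho.
apply: IH => //; by rewrite -iterSr.
Qed.

Lemma iter_sf n (s : 'S_n) e (x : 'I_n) : iter e (sf s) (val x) = val (iter e s x).
Proof. by elim: e => //= e ->; rewrite sf_val. Qed.

Lemma FR_perm n (s : 'S_n) m i k : (i < m)%N -> (i < n)%N -> (n <= k)%N ->
  FR (sf s) m i (cn (sf s) m k i).
Proof.
move=> im iN nk.
pose x := Ordinal iN.
have o0 := fingraph.order_gt0 s x.
apply: (@FR_cn _ _ (fingraph.order s x)) => //.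
- by rewrite (_ : i = val x) // iter_sf iter_order //; exact: perm_inj.
- apply: leq_trans nk; rewrite /fingraph.order.
  by apply: leq_trans (max_card _) _; rewrite card_ord.
Qed.

Lemma FR_transfer (f g : nat -> nat) n m :
  (m <= n)%N ->
  (forall j, (j < n)%N -> g j < n)%N ->
  (forall j, (j <= n)%N -> f j <= n)%N ->
  (forall j, (j < n)%N -> g j = if (f j < n)%N then f j else f n) ->
  forall x y, (x < n)%N -> FR g m x y -> FR f m x y.
Proof.
move=> mn gn fn cons x y xn H; elim: H xn => [z hz|z w hz _ IH] zn.
- move: (cons z zn) hz; case: ifP => hf -> hz; first exact: FR1.
  have fz : f z = n by apply/eqP; rewrite eqn_leq (fn z (ltnW zn)) leqNgt hf.
  apply: FR2; first by rewrite fz.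
  by rewrite fz; exact: FR1.
- have IH' := IH (gn z zn); move: (cons z zn) hz IH'; case: ifP => hf -> hz IH'.
    exact: FR2.
  have fz : f z = n by apply/eqP; rewrite eqn_leq (fn z (ltnW zn)) leqNgt hf.
  apply: FR2; first by rewrite fz.
  by rewrite fz; apply: FR2.
Qed.

Lemma sf_inj n (s : 'S_n) x y : (x < n)%N -> (y < n)%N -> sf s x = sf s y -> x = y.
Proof.
move=> xn yn; rewrite -[x]/(val (Ordinal xn)) -[y]/(val (Ordinal yn)) !sf_val.
by move/val_inj/perm_inj => ->.
Qed.

Definition consec (sigma : forall n : nat, 'S_n) :=
  forall n, (1 <= n)%N -> forall j, (j < n)%N ->
    sf (sigma n) j = if (sf (sigma n.+1) j < n)%N then sf (sigma n.+1) j
                     else sf (sigma n.+1) n.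

Lemma consec_vp sigma : consec sigma <-> virtual_permutation sigma.
Proof.
split.
- move=> C m n m1 mn i.
  rewrite -(subnKC mn); elim: (n - m)%N => [|d IH].
  + rewrite addn0 pnm_cn; try exact: ltn_ord.
    case: m m1 i {C mn} => [//|m] _ i /=; by rewrite sf_val ltn_ord.
  + set N := (m + d)%N in IH *.
    have iN : (i < N)%N by apply: leq_trans (ltn_ord i) (leq_addr _ _).
    rewrite addnS pnm_cn; last by apply: leq_trans iN _.
    have H1 := FR_perm (sigma N) (ltn_ord i) iN (leqnn N).
    have H2 : FR (sf (sigma N.+1)) m i (cn (sf (sigma N)) m N i).
      apply: (@FR_transfer (sf (sigma N.+1)) (sf (sigma N)) N) => //.
      * exact: leq_addr.
      * by move=> j jN; apply: sf_lt.
      * by move=> j jN; exact: (@sf_lt N.+1 (sigma N.+1) j jN).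
      * move=> j jN; apply: C => //; exact: leq_trans m1 (leq_addr _ _).
    have H3 := FR_perm (sigma N.+1) (ltn_ord i) (leq_trans iN (leqnSn _)) (leqnn N.+1).
    rewrite IH (pnm_cn _ _ iN); exact: FR_det H2 H3.
- move=> V n n1 j jn.
  have := V n n.+1 n1 (leqnSn n) (Ordinal jn).
  rewrite -(sf_val (sigma n) (Ordinal jn)) /= => ->.
  rewrite (@pnm_cn n.+1 _ _ _ (ltnW jn)) /=.
  case: ifP => // hf.
  set f := sf (sigma n.+1).
  have fjn : (f j < n.+1)%N by apply: sf_lt; exact: (ltnW jn).
  have fj : f j = n.
    by apply/eqP; rewrite eqn_leq -ltnS fjn leqNgt hf.
  rewrite fj.
  clear fjn; rewrite /f in hf fj *; clear f.
  case: n n1 jn hf fj {V} => [//|n] _ jn hf fj /=.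
  set f := sf (sigma n.+2) in hf fj *.
  case: ifP => // hfn.
  have fnn : (f n.+1 < n.+2)%N by apply: sf_lt.
  have : f n.+1 = n.+1.
    by apply/eqP; rewrite eqn_leq -ltnS fnn leqNgt hfn.
  rewrite -{2}fj => /sf_inj E.
  have Ej := E (leqnn _) (ltnW jn).
  by rewrite Ej ltnn in jn.
Qed.

Import Order.TTheory GRing.Theory Num.Theory.
Local Open Scope ring_scope.

Section M.
Variable R : realType.
Local Notation C := R[i].

Lemma pmE n (s : 'S_n) : perm_matrix R s = perm_mx s^-1.
Proof.
apply/matrixP => i j; rewrite /perm_matrix /perm_mx !mxE.
by rewrite -(inj_eq (@perm_inj _ s) (s^-1%g i)) permKV eq_sym.
Qed.

Lemma perm_unitary n (s : 'S_n) : unitary (perm_matrix R s).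
Proof.
rewrite /unitary /conjT pmE.
have -> : map_mx (@conjc R) (perm_mx s^-1) = perm_mx s^-1 :> 'M[C]_n.
  by apply/matrixP => i j; rewrite /perm_mx !mxE conjc_nat.
by rewrite tr_perm_mx -perm_mxM mulgV perm_mx1.
Qed.

Lemma E1 n (t : 'S_n) (l j : 'I_n) :
  perm_matrix R t l j = (val l == sf t j)%:R.
Proof. by rewrite mxE sf_val. Qed.

Lemma E2 n (s : 'S_n) (l j : 'I_n.+1) :
  @embed_mx R n n.+1 (perm_matrix R s) l j = (val l == sf s j)%:R.
Proof.
rewrite mxE; case: (@insubP _ _ 'I_n (val l)) => [l' hl el|hl];
  case: (@insubP _ _ 'I_n (val j)) => [j' hj ej|hj].
- by rewrite E1 -el -ej sf_val.
- by rewrite sf_out // leqNgt.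
- have b := sf_lt s hj; have a : (n <= l)%N by rewrite leqNgt.
  have -> : (val l == sf s j) = false.
    by apply/negbTE; apply/eqP => e; rewrite -e ltnNge a in b.
  have -> // : (l == j) = false.
  by apply/negbTE; apply/eqP => e; rewrite -e ltnNge a in hj.
- by rewrite sf_out // leqNgt.
Qed.

Lemma XW n (t : 'S_n.+1) (X : 'M[C]_n.+1) j l :
 (X *m ((perm_matrix R t - 1%:M) *m tail_proj R n n.+1)^T) j l =
 X j ord_max * ((val l == sf t n)%:R - (val l == n)%:R).
Proof.
rewrite /tail_proj mul_mx_diag !mxE big_ord_recr /= big1 ?add0r.
  rewrite !mxE /= leqnn mulr1; congr (_ * (_ - _)).
  by rewrite -[n in sf t n]/(val (@ord_max n)) sf_val.
move=> k _; rewrite !mxE /= leqNgt ltn_ord /= mulr0 mulr0 //.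
Qed.

Lemma DT n (t : 'S_n.+1) (s : 'S_n) j l :
 (perm_matrix R t - @embed_mx R n n.+1 (perm_matrix R s))^T j l =
 (val l == sf t j)%:R - (val l == sf s j)%:R.
Proof. by rewrite mxE mxE E1 mxE E2. Qed.

Lemma pi_rel_iff n (t : 'S_n.+1) (s : 'S_n) :
  pi_rel (perm_matrix R t) (perm_matrix R s) <->
  (forall j, (j < n)%N -> sf s j = if (sf t j < n)%N then sf t j else sf t n).
Proof.
split.
- case=> _ /submxP [X HX] j jn.
  pose x := X (widen_ord (leqnSn n) (Ordinal jn)) ord_max.
  have H : forall v, (v <= n)%N ->
      (v == sf t j)%:R - (v == sf s j)%:R =
      x * ((v == sf t n)%:R - (v == n)%:R) :> C.
    move=> v vn.
    have := congr1 (fun M : 'M[C]_n.+1 => M (widen_ord (leqnSn n) (Ordinal jn)) (inord v)) HX.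
    rewrite /= DT XW.
    have iv : val (@inord n v) = v by exact: inordK.
    by rewrite iv.
  have jn1 : (j < n.+1)%N by apply: ltnW.
  have ftj : (sf t j <= n)%N by exact: (sf_lt t jn1).
  have ftn : (sf t n <= n)%N by exact: (@sf_lt n.+1 t n (leqnn n.+1)).
  have neq : (sf t j == sf t n) = false.
    apply/negbTE/eqP => /sf_inj e; have := e jn1 (leqnn n.+1).
    by move=> ejn; have := jn; rewrite ejn ltnn.
  have gj : (sf s j < n)%N by apply: sf_lt.
  case: ifP => hf.
  + apply/eqP; apply/negPn/negP => ne.
    have := H (sf t j) ftj.
    rewrite eqxx eq_sym (negbTE ne) neq (ltn_eqF hf) /= ?mulr1n ?mulr0n.
    by rewrite subr0 subrr mulr0 => /eqP; rewrite oner_eq0.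
  + have fj : sf t j = n.
      by apply/eqP; rewrite eqn_leq ftj leqNgt hf.
    have h1 := H n (leqnn n).
    move: h1; rewrite fj eqxx (eq_sym n (sf s j)) (ltn_eqF gj).
    have -> : (n == sf t n) = false by move: neq; rewrite fj.
    rewrite /= ?mulr1n ?mulr0n sub0r mulrN1 subr0 => h1.
    have hx : x = -1 by rewrite -[x]opprK -h1.
    have := H (sf t n) ftn.
    rewrite eqxx (eq_sym (sf t n) (sf t j)) neq.
    have -> : (sf t n == n) = false by move: neq; rewrite fj eq_sym.
    apply: contra_eq => ne.
    rewrite (eq_sym (sf t n) (sf s j)) (negbTE ne) /= ?mulr1n ?mulr0n hx.
    by rewrite subrr subr0 mulr1 eq_sym oppr_eq0 oner_eq0.
- move=> Hc; split; first exact: perm_unitary.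
  apply/submxP.
  exists (\matrix_(j, k) ((val j == n)%:R - (sf t j == n)%:R)).
  apply/matrixP => j l; rewrite DT XW mxE.
  have [jn|jn] := ltnP j n.
  + rewrite (Hc j jn) (ltn_eqF jn).
    case: ifP => hf.
      by rewrite subrr (ltn_eqF hf) /= ?mulr0n subrr mul0r.
    have fj : sf t j = n.
      by apply/eqP; rewrite eqn_leq (leqNgt n) hf andbT; exact: (sf_lt t (ltn_ord j)).
    by rewrite fj eqxx /= ?mulr0n ?mulr1n sub0r mulN1r opprB.
  + have -> : j = ord_max.
      by apply: val_inj; apply/eqP; rewrite /= eqn_leq jn -ltnS ltn_ord.
    rewrite /= (sf_out s (leqnn n)) eqxx.
    case e: (sf t n == n).
      by move/eqP: e => e; rewrite e /= ?mulr1n !subrr mul0r.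
    by rewrite /= ?mulr1n ?mulr0n subr0 mul1r.
Qed.

End M.

Theorem proposition2p3 (R : realType) (sigma : forall n : nat, 'S_n) :
  virtual_isometry (fun n => perm_matrix R (sigma n)) <->
  virtual_permutation sigma.
Proof.
rewrite -consec_vp; split.
- move=> [_ H] n n1 j jn.
  have := H n n1. move/(@pi_rel_iff R n (sigma n.+1) (sigma n)). move=> Hq. apply: Hq. exact: jn.
- move=> Cs; split => n n1. exact: (@perm_unitary R).
  apply/(@pi_rel_iff R n (sigma n.+1) (sigma n)). move=> j jn; apply: Cs => //.
Qed.
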